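(* Let $T$ be a trace (well formed, with a matching release for each acquire) and let $<$ be a strict partial order on $\mathrm{evts}(T)$ satisfying the MHB-Criteria. Then every predictable deadlock in $T$ for the lock set function $\mathrm{LH}_{<}$ is also a predictable deadlock in $T$ for the lock set function $\mathrm{LH}_T$; i.e. $\mathrm{PD}(\mathrm{LH}_{<})\subseteq\mathrm{PD}(\mathrm{LH}_T)$.
   Context: Events and traces. An event is a triple $e=(\alpha,t,op)$ with a unique identifier $\alpha$, a thread id $t$ and an operation $op$, which is one of $\mathit{rd}(x)$, $\mathit{wr}(x)$ (read/write of a shared variable $x$) or $\mathit{req}(l)$, $\mathit{acq}(l)$, $\mathit{rel}(l)$ (request, acquire, release of a lock $l$). Write $\mathrm{thd}(e)=t$. A trace is a finite list of events with distinct identifiers; $e\in T$ means $e$ occurs in $T$, $\mathrm{evts}(T)$ is its set of events, and $e<_T f$ means $e$ occurs at an earlier position than $f$ in $T$. An event $e$ is final in $T$ if there is no $f\in T$ with $e<_T f$ and $\mathrm{thd}(f)=\mathrm{thd}(e)$. Well formedness. $T$ is well formed if: (WF-Acq) for all $a=(t,\mathit{acq}(l))$, $a'=(t',\mathit{acq}(l))$ in $T$ with $a<_T a'$ there is $r=(t,\mathit{rel}(l))\in T$ with $a<_T r<_T a'$; (WF-Rel) for every $r=(t,\mathit{rel}(l))\in T$ there is $a=(t,\mathit{acq}(l))\in T$ with $a<_T r$ and no $r'=(t',\mathit{rel}(l))\in T$ with $a<_T r'<_T r$; (WF-Req) for every $a=(t,\mathit{acq}(l))\in T$ there is $q=(t,\mathit{req}(l))\in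 T$ with $q<_T a$ and no event of thread $t$ strictly between $q$ and $a$, and for every $q=(t,\mathit{req}(l))\in T$, the event of thread $t$ immediately following $q$ in $T$ (if any) is of the form $(t,\mathit{acq}(l))$. Standing assumption: $T$ is well formed and every acquire has a matching release in $T$. Correct reorderings. For a read $e=(\cdot,\mathit{rd}(x))\in T$, $\mathrm{lw}_T(e)$ is the write $f=(\cdot,\mathit{wr}(x))$ with $f<_T e$ and no write on $x$ strictly between them in $T$. A trace $T'$ is a correctly reordered prefix of $T$ if (CRP-WF) $T'$ is well formed and $\mathrm{evts}(T')\subseteq\mathrm{evts}(T)$; (CRP-PO) for every thread $t$ of $T'$, the subsequence of thread-$t$ events of $T'$ is a prefix of that of $T$; (CRP-LW) for every read $e\in T'$ with $f=\mathrm{lw}_T(e)$ we have $f=\mathrm{lw}_{T'}(e)$. $\mathrm{crp}(T)$ is the set of correctly reordered prefixes of $T$. Trace-based lock sets. Write $e\prec_T f$ if for every $T'\in\mathrm{crp}(T)$ with $f\in T'$ we have $e\in T'$ and $e<_{T'}f$. For $a=(t,\mathit{acq}(l))$, $r=(t,\mathit{rel}(l))\in T$, $e\in\mathrm{CS}_T(a,r)$ iff (CS-Enclosed) $a\prec_T e$ and $e\prec_T r$, and (CS-Match) there is no release $r'=(t,\mathit{rel}(l))\in T$ and $T'\in\mathrm{crp}(T)$ with $a<_{T'}r'<_{T'}e$. $\mathrm{LH}_T(e)=\{(l,t)\mid \exists a,r\in T,\ a=(t,\mathit{acq}(l)),\ e\in\mathrm{CS}_T(a,r)\}$. Partial-order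 lock sets. For a strict partial order $<$ on $\mathrm{evts}(T)$ and $a=(t,\mathit{acq}(l))$, $r=(t,\mathit{rel}(l))\in T$: $e\in\mathrm{CS}_{<}(a,r)$ iff (PO-CS-Enclosed) $a<e$ and $e<r$, and (PO-CS-Match) there is no release $r'=(t,\mathit{rel}(l))\in T$ and $T'\in\mathrm{crp}(T)$ with $a<_{T'}r'<_{T'}e$. $\mathrm{LH}_{<}(e)=\{(l,t)\mid \exists a,r\in T,\ a=(t,\mathit{acq}(l)),\ e\in\mathrm{CS}_{<}(a,r)\}$. The order $<$ satisfies the MHB-Criteria if whenever $e<f$, for every $T'\in\mathrm{crp}(T)$ with $f\in T'$ we have $e\in T'$ and $e<_{T'}f$. Deadlock patterns. A lock set function $L$ maps events of $T$ to sets of pairs (lock, thread id). Write $l\in L(e)$ if $(l,t)\in L(e)$ for some $t$. For such sets $M,N$ let $M\Cap N=\{l\mid (l,s)\in M,(l,t)\in N, s\neq t\}$. For $n>1$ and request events $q_i=(t_i,\mathit{req}(l_i))\in T$, the set $\{q_1,\dots,q_n\}$ is a deadlock pattern for $L$ if (DP-Thread) $\mathrm{thd}(q_i)\ne\mathrm{thd}(q_j)$ for $i\ne j$; (DP-Cycle) $l_i\in L(q_{(i \bmod n)+1})$ for every $i$; (DP-Guard) $L(q_i)\Cap L(q_j)=\emptyset$ for $i\neq j$. It is a predictable deadlock for $L$ if in addition there is a witness $T'\in\mathrm{crp}(T)$ in which each $q_i$ is final. $\mathrm{PD}(L)$ denotes the set of predictable deadlocks in $T$ for $L$. *)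

(* Defs.v *)
From Stdlib Require Import List Arith Lia.
Import ListNotations.

Inductive op : Type :=
| Rd (x : nat) | Wr (x : nat)
| Req (l : nat) | Acq (l : nat) | Rel (l : nat).

Record event : Type := Ev { eid : nat; ethd : nat; eop : op }.

Definition trace := list event.

Definition is_trace (T : trace) : Prop := NoDup (map eid T).

Definition before (T : trace) (e f : event) : Prop :=
  exists i j, i < j /\ nth_error T i = Some e /\ nth_error T j = Some f.

Definition final (T : trace) (e : event) : Prop :=
  In e T /\ forall f, In f T -> before T e f -> ethd f <> ethd e.

Definition wf_acq (T : trace) : Prop :=
  forall a a' l, In a T -> In a' T -> eop a = Acq l -> eop a' = Acq l ->
    before T a a' ->
    exists r, In r T /\ eop r = Rel l /\ ethd r = ethd a /\
              before T a r /\ before T r a'.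

Definition wf_rel (T : trace) : Prop :=
  forall r l, In r T -> eop r = Rel l ->
    exists a, In a T /\ eop a = Acq l /\ ethd a = ethd r /\ before T a r /\
      ~ (exists r', In r' T /\ eop r' = Rel l /\ before T a r' /\ before T r' r).

Definition wf_req (T : trace) : Prop :=
  (forall a l, In a T -> eop a = Acq l ->
     exists q, In q T /\ eop q = Req l /\ ethd q = ethd a /\ before T q a /\
       ~ (exists g, In g T /\ ethd g = ethd a /\ before T q g /\ before T g a))
  /\
  (forall q l g, In q T -> eop q = Req l -> In g T -> ethd g = ethd q ->
     before T q g ->
     ~ (exists h, In h T /\ ethd h = ethd q /\ before T q h /\ before T h g) ->
     eop g = Acq l).

Definition well_formed (T : trace) : Prop :=
  wf_acq T /\ wf_rel T /\ wf_req T.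

Definition acq_matched (T : trace) : Prop :=
  forall a l, In a T -> eop a = Acq l ->
    exists r, In r T /\ eop r = Rel l /\ ethd r = ethd a /\ before T a r /\
      ~ (exists r', In r' T /\ eop r' = Rel l /\ before T a r' /\ before T r' r).

Definition last_write (T : trace) (e f : event) : Prop :=
  exists x, eop e = Rd x /\ In f T /\ eop f = Wr x /\ before T f e /\
    ~ (exists g, In g T /\ eop g = Wr x /\ before T f g /\ before T g e).

Definition proj (t : nat) (T : trace) : trace :=
  filter (fun e => Nat.eqb (ethd e) t) T.

Definition crp (T T' : trace) : Prop :=
  is_trace T' /\
  well_formed T' /\ incl T' T /\
  (forall t, exists s, proj t T = proj t T' ++ s) /\
  (forall e f, In e T' -> last_write T e f -> last_write T' e f).

Definition mhb (T : trace) (e f : event) : Prop :=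
  forall T', crp T T' -> In f T' -> In e T' /\ before T' e f.

(* Lock sets are sets of pairs (lock, thread id). *)
Definition lockset := (nat * nat) -> Prop.
Definition lockset_fun := event -> lockset.

Definition cs_match (T : trace) (a : event) (l : nat) (e : event) : Prop :=
  ~ (exists r' T', In r' T /\ eop r' = Rel l /\ ethd r' = ethd a /\
                   crp T T' /\ before T' a r' /\ before T' r' e).

Definition CS_T (T : trace) (l : nat) (a r e : event) : Prop :=
  mhb T a e /\ mhb T e r /\ cs_match T a l e.

Definition LH_T (T : trace) : lockset_fun :=
  fun e p => exists a r, In a T /\ In r T /\
    eop a = Acq (fst p) /\ ethd a = snd p /\
    eop r = Rel (fst p) /\ ethd r = snd p /\ CS_T T (fst p) a r e.

Definition CS_po (T : trace) (lt : event -> event -> Prop) (l : nat)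
  (a r e : event) : Prop :=
  lt a e /\ lt e r /\ cs_match T a l e.

Definition LH_po (T : trace) (lt : event -> event -> Prop) : lockset_fun :=
  fun e p => exists a r, In a T /\ In r T /\
    eop a = Acq (fst p) /\ ethd a = snd p /\
    eop r = Rel (fst p) /\ ethd r = snd p /\ CS_po T lt (fst p) a r e.

Definition strict_po_on (T : trace) (lt : event -> event -> Prop) : Prop :=
  (forall e f, lt e f -> In e T /\ In f T) /\
  (forall e, ~ lt e e) /\
  (forall e f g, lt e f -> lt f g -> lt e g).

Definition MHB_criteria (T : trace) (lt : event -> event -> Prop) : Prop :=
  forall e f, lt e f -> mhb T e f.

Definition lock_in (l : nat) (M : lockset) : Prop := exists t, M (l, t).

Definition guard_empty (M N : lockset) : Prop :=
  ~ (exists l s t, M (l, s) /\ N (l, t) /\ s <> t).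

Definition dflt : event := Ev 0 0 (Rd 0).

(* A deadlock pattern, given as an enumeration q_1 .. q_n (index 0 .. n-1). *)
Definition deadlock_pattern (T : trace) (L : lockset_fun) (qs : list event)
  : Prop :=
  let n := length qs in
  1 < n /\
  (forall i, i < n -> In (nth i qs dflt) T /\
              exists l, eop (nth i qs dflt) = Req l) /\
  (forall i j, i < n -> j < n -> i <> j ->
     ethd (nth i qs dflt) <> ethd (nth j qs dflt)) /\
  (forall i l, i < n -> eop (nth i qs dflt) = Req l ->
     lock_in l (L (nth (S i mod n) qs dflt))) /\
  (forall i j, i < n -> j < n -> i <> j ->
     guard_empty (L (nth i qs dflt)) (L (nth j qs dflt))).

Definition in_PD (T : trace) (L : lockset_fun) (S : event -> Prop) : Prop :=
  exists qs, (forall e, S e <-> In e qs) /\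
    deadlock_pattern T L qs /\
    exists T', crp T T' /\ forall q, In q qs -> final T' q.

(* Main.v *)
Require Import Defs.
From Stdlib Require Import List Arith Lia.
From Stdlib Require Import Classical Permutation.
Import ListNotations.

Lemma before_nil x y : ~ before [] x y.
Proof. intros (i & j & _ & H & _). destruct i; discriminate. Qed.

Lemma before_cons z L x y :
  before (z :: L) x y <-> (x = z /\ In y L) \/ before L x y.
Proof.
  split.
  - intros (i & j & Hij & Hi & Hj). destruct i as [|i]; destruct j as [|j]; try lia.
    + left. simpl in *. inversion Hi; subst. split; auto. eapply nth_error_In; eauto.
    + right. exists i, j. simpl in *. repeat split; auto; lia.
  - intros [[-> Hy] | (i & j & Hij & Hi & Hj)].
    + apply In_nth_error in Hy as [j Hj]. exists 0, (S j). repeat split; auto; lia.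
    + exists (S i), (S j). simpl. repeat split; auto; lia.
Qed.

Lemma before_In L x y : before L x y -> In x L /\ In y L.
Proof. intros (i & j & _ & Hi & Hj). split; eapply nth_error_In; eauto. Qed.

Lemma before_app L1 L2 x y :
  before (L1 ++ L2) x y <-> before L1 x y \/ before L2 x y \/ (In x L1 /\ In y L2).
Proof.
  induction L1 as [|z L1 IH]; simpl.
  - split; [tauto|]. intros [H|[H|[[] _]]]; [exfalso; eapply before_nil; eauto|auto].
  - rewrite !before_cons, IH, in_app_iff. split.
    + intros [[-> [Hy|Hy]]|[H|[H|[H1 H2]]]]; auto.
    + intros [[[-> Hy]|H]|[H|[[<-|H1] H2]]]; auto.
Qed.

Lemma before_total L x y : In x L -> In y L -> x <> y -> before L x y \/ before L y x.
Proof.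
  intros Hx Hy Hne. apply In_nth_error in Hx as [n Hn]. apply In_nth_error in Hy as [m Hm].
  destruct (lt_eq_lt_dec n m) as [[H|H]|H].
  - left. exists n, m. auto.
  - subst. rewrite Hn in Hm. inversion Hm. contradiction.
  - right. exists m, n. auto.
Qed.

Lemma P_iff A B q x y :
  before (A ++ q :: B) x y <->
  before A x y \/ (In x A /\ (q = y \/ In y B)) \/ (x = q /\ In y B) \/ before B x y.
Proof. rewrite before_app, before_cons. simpl. tauto. Qed.

Lemma Q_iff A B q x y :
  before (A ++ B ++ [q]) x y <->
  before A x y \/ before B x y \/ (In x A /\ In y B) \/ ((In x A \/ In x B) /\ y = q).
Proof.
  assert (Hs : ~ before [q] x y).
  { rewrite before_cons. intros [[_ []]|H]. eapply before_nil; eauto. }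
  rewrite !before_app. rewrite in_app_iff. simpl.
  split; intros; intuition (subst; tauto).
Qed.

Lemma conv1 A B q x y : ~ In q A -> ~ In q B -> x <> q -> y <> q ->
  before (A ++ q :: B) x y -> before (A ++ B ++ [q]) x y.
Proof.
  intros HA HB Hx Hy H. rewrite P_iff in H. rewrite Q_iff.
  destruct H as [H|[[H1 [H2|H2]]|[H|H]]]; auto. congruence. tauto.
Qed.

Lemma conv2 A B q x y : ~ In q A -> ~ In q B -> before (A ++ B ++ [q]) x y ->
  x <> q /\ (y <> q -> before (A ++ q :: B) x y) /\ (y = q -> In x A \/ In x B).
Proof.
  intros HA HB H. rewrite Q_iff in H. rewrite P_iff.
  destruct H as [H|[H|[[H1 H2]|[H1 H2]]]]; try pose proof (before_In _ _ _ H);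
    repeat split; try intro; subst; tauto.
Qed.

Lemma conv3 (A B : list event) (q x : event) : In x A \/ In x B -> before (A ++ B ++ [q]) x q.
Proof. intros H. rewrite Q_iff. auto. Qed.

Lemma inT (A B : list event) (q x : event) : In x (A ++ B ++ [q]) <-> In x (A ++ q :: B).
Proof. rewrite !in_app_iff. simpl. tauto. Qed.

Lemma filter_nil_all {X} (f : X -> bool) l : (forall x, In x l -> f x = false) -> filter f l = [].
Proof.
  induction l as [|a l IH]; simpl; auto. intros H. rewrite H by auto. apply IH; auto.
Qed.

Lemma move_end T A B q l0 :
  crp T (A ++ q :: B) -> (forall f, In f B -> ethd f <> ethd q) -> eop q = Req l0 ->
  crp T (A ++ B ++ [q]).
Proof.
  intros (Htr & (Wacq & Wrel & Wreq1 & Wreq2) & Hincl & Hpo & Hlw) Hfin Hq.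
  assert (Hnd : NoDup (A ++ q :: B)) by (eapply NoDup_map_inv; exact Htr).
  pose proof (NoDup_remove_2 _ _ _ Hnd) as Hn. rewrite in_app_iff in Hn.
  assert (HA : ~ In q A) by tauto. assert (HB : ~ In q B) by tauto.
  assert (Hne : forall x, (exists k, eop x = Rd k \/ eop x = Wr k \/ eop x = Acq k \/ eop x = Rel k) -> x <> q).
  { intros x [k Hk] ->. rewrite Hq in Hk. intuition discriminate. }
  assert (HP_B : forall f, In f B -> before (A ++ q :: B) q f).
  { intros f Hf. rewrite P_iff. auto. }
  assert (Hqlast : forall y, ~ before (A ++ B ++ [q]) q y).
  { intros y H. destruct (conv2 _ _ _ _ _ HA HB H) as [H1 _]. auto. }
  repeat split.
  - unfold is_trace. eapply Permutation_NoDup; [|exact Htr]. apply Permutation_map.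
    rewrite app_assoc. eapply Permutation_trans; [apply Permutation_sym, Permutation_middle|].
    apply Permutation_cons_append.
  -
    intros a a' l Ha Ha' Ea Ea' Hb. apply inT in Ha. apply inT in Ha'.
    assert (a <> q) by (apply Hne; eauto 6). assert (a' <> q) by (apply Hne; eauto 6).
    destruct (conv2 _ _ _ _ _ HA HB Hb) as [_ [Hb' _]].
    destruct (Wacq a a' l Ha Ha' Ea Ea' (Hb' H0)) as (r & Hr & Er & Tr & B1 & B2).
    assert (r <> q) by (apply Hne; eauto 6).
    exists r. repeat split; auto. apply inT; auto. apply conv1; auto. apply conv1; auto.
  -
    intros r l Hr Er. apply inT in Hr. assert (r <> q) by (apply Hne; eauto 6).
    destruct (Wrel r l Hr Er) as (a & Ha & Ea & Ta & Bar & Hnot).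
    assert (a <> q) by (apply Hne; eauto 6).
    exists a. repeat split; auto. apply inT; auto. apply conv1; auto.
    intros (r' & Hr' & Er' & B1 & B2). apply Hnot. apply inT in Hr'.
    assert (r' <> q) by (apply Hne; eauto 6).
    exists r'. repeat split; auto.
    apply (conv2 _ _ _ _ _ HA HB B1); auto. apply (conv2 _ _ _ _ _ HA HB B2); auto.
  -
    intros a l Ha Ea. apply inT in Ha. assert (a <> q) by (apply Hne; eauto 6).
    destruct (Wreq1 a l Ha Ea) as (q0 & Hq0 & Eq0 & Tq0 & Bq & Hnot).
    assert (q0 <> q).
    { intros ->. assert (In a B).
      { rewrite P_iff in Bq. destruct Bq as [Bq|[[Hq1 _]|[[_ Hq1]|Bq]]]; try tauto;
        apply before_In in Bq; tauto. }
      apply (Hfin a); auto. }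
    exists q0. repeat split; auto. apply inT; auto. apply conv1; auto.
    intros (g & Hg & Tg & B1 & B2). apply Hnot. apply inT in Hg.
    assert (g <> q) by (intros ->; eapply Hqlast; eauto).
    exists g. repeat split; auto.
    apply (conv2 _ _ _ _ _ HA HB B1); auto. apply (conv2 _ _ _ _ _ HA HB B2); auto.
  -
    intros q0 l g Hq0 Eq0 Hg Tg Bq Hnot. apply inT in Hq0. apply inT in Hg.
    assert (q0 <> q) by (intros ->; eapply Hqlast; eauto).
    destruct (classic (g = q)) as [->|Hgq].
    + exfalso. destruct (conv2 _ _ _ _ _ HA HB Bq) as [_ [_ Hin]].
      destruct (Hin eq_refl) as [HinA|HinB].
      2:{ apply (Hfin q0); auto. }
      assert (Bq' : before (A ++ q :: B) q0 q) by (rewrite P_iff; auto).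
      destruct (classic (exists h, In h (A ++ q :: B) /\ ethd h = ethd q0 /\
                  before (A ++ q :: B) q0 h /\ before (A ++ q :: B) h q)) as [[h (Hh & Th & H1 & H2)]|Hno].
      * apply Hnot. assert (h <> q).
        { intros ->. rewrite P_iff in H2. destruct H2 as [H2|[[H2 _]|[[_ H2]|H2]]];
          try tauto; apply before_In in H2; tauto. }
        exists h. repeat split; auto. apply inT; auto. apply conv1; auto.
        apply conv3. rewrite P_iff in H2. destruct H2 as [H2|[[H2 _]|[[_ H2]|H2]]];
          try tauto; apply before_In in H2; tauto.
      * pose proof (Wreq2 q0 l q Hq0 Eq0 Hg Tg Bq' Hno). congruence.
    + destruct (conv2 _ _ _ _ _ HA HB Bq) as [_ [Bq' _]].
      apply (Wreq2 q0 l g Hq0 Eq0 Hg Tg (Bq' Hgq)).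
      intros (h & Hh & Th & H1 & H2). apply Hnot.
      assert (h <> q).
      { intros ->. apply (Hfin g). rewrite P_iff in H2.
        destruct H2 as [H2|[[H2 _]|[[_ H2]|H2]]]; try tauto.
        - apply before_In in H2; tauto.
        - subst. apply before_In in H2; tauto.
        - congruence. }
      exists h. repeat split; auto. apply inT; auto. apply conv1; auto. apply conv1; auto.
  - intros x Hx. apply Hincl, inT, Hx.
  - intros t. destruct (Hpo t) as [s Hs]. exists s. rewrite Hs. f_equal.
    unfold proj. rewrite !filter_app. simpl. destruct (ethd q =? t) eqn:E.
    + apply Nat.eqb_eq in E. rewrite (filter_nil_all _ B). reflexivity.
      intros x Hx. apply Nat.eqb_neq. intros <-. apply (Hfin x); auto.
    + rewrite app_nil_r. reflexivity.
  - intros e f He Hl. apply inT in He.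
    destruct (Hlw e f He Hl) as (x & Ex & Hf & Ef & Bfe & Hnot).
    assert (e <> q) by (apply Hne; eauto 6). assert (f <> q) by (apply Hne; eauto 6).
    exists x. repeat split; auto. apply inT; auto. apply conv1; auto.
    intros (g & Hg & Eg & B1 & B2). apply Hnot. apply inT in Hg.
    assert (g <> q) by (apply Hne; eauto 6).
    exists g. repeat split; auto.
    apply (conv2 _ _ _ _ _ HA HB B1); auto. apply (conv2 _ _ _ _ _ HA HB B2); auto.
Qed.

Lemma guard_core T T' q l0 l a1 a2 :
  crp T T' -> final T' q -> eop q = Req l0 -> In a1 T' -> In a2 T' ->
  eop a1 = Acq l -> eop a2 = Acq l -> before T' a1 a2 -> cs_match T a1 l q -> False.
Proof.
  intros Hc [Hq Hfin] Eq Ha1 Ha2 E1 E2 Hb Hcs.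
  pose proof Hc as (_ & (Wacq & _) & Hincl & _).
  destruct (Wacq a1 a2 l Ha1 Ha2 E1 E2 Hb) as (r & Hr & Er & Tr & B1 & _).
  apply in_split in Hq as (A & B & ->).
  assert (Hc2 : crp T (A ++ B ++ [q])).
  { eapply move_end; eauto. intros f Hf. apply Hfin. apply in_app_iff; simpl; auto.
    rewrite P_iff; auto. }
  pose proof Hc as (Htr & _). assert (Hnd : NoDup (A ++ q :: B)) by (eapply NoDup_map_inv; exact Htr).
  pose proof (NoDup_remove_2 _ _ _ Hnd) as Hn. rewrite in_app_iff in Hn.
  assert (r <> q) by (intros ->; congruence).
  assert (a1 <> q) by (intros ->; congruence).
  apply Hcs. exists r, (A ++ B ++ [q]).
  split; [apply Hincl; exact Hr|]. split; [exact Er|]. split; [exact Tr|].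
  split; [exact Hc2|]. split.
  - apply conv1; tauto.
  - apply conv3. apply in_app_iff in Hr. simpl in Hr. intuition congruence.
Qed.

Lemma LH_mono T lt e p : MHB_criteria T lt -> LH_po T lt e p -> LH_T T e p.
Proof.
  intros Hm (a & r & Ha & Hr & E1 & E2 & E3 & E4 & H1 & H2 & H3).
  exists a, r. do 6 (split; [assumption|]). split; [apply Hm; auto|]. split; [apply Hm; auto|]. exact H3.
Qed.

Theorem lemma6p6 (T : trace) (lt : event -> event -> Prop) :
  is_trace T -> well_formed T -> acq_matched T ->
  strict_po_on T lt -> MHB_criteria T lt ->
  forall S : event -> Prop, in_PD T (LH_po T lt) S -> in_PD T (LH_T T) S.
Proof.
  intros HT Hwf Hm Hpo Hmhb S (qs & HS & Hdp & T' & Hc & Hfin).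
  exists qs. split; [exact HS|]. split; [|exists T'; auto].
  destruct Hdp as (H1 & H2 & H3 & H4 & H5).
  split; [exact H1|]. split; [exact H2|]. split; [exact H3|]. split.
  - intros i l Hi Hq. destruct (H4 i l Hi Hq) as [t Ht]. exists t. eapply LH_mono; eauto.
  - intros i j Hi Hj Hij (l & s & t & Hs & Ht & Hst).
    assert (Fi : final T' (nth i qs dflt)) by (apply Hfin, nth_In; auto).
    assert (Fj : final T' (nth j qs dflt)) by (apply Hfin, nth_In; auto).
    destruct (H2 i Hi) as [_ [li Ei]]. destruct (H2 j Hj) as [_ [lj Ej]].
    destruct Hs as (as_ & rs & _ & _ & Eas & Tas & _ & _ & Ms & _ & Cs).
    destruct Ht as (at_ & rt & _ & _ & Eat & Tat & _ & _ & Mt & _ & Ct).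
    simpl in *.
    destruct (Ms T' Hc (proj1 Fi)) as [Ias _].
    destruct (Mt T' Hc (proj1 Fj)) as [Iat _].
    assert (as_ <> at_) by (intros ->; congruence).
    destruct (before_total T' as_ at_ Ias Iat H) as [Hb|Hb].
    + exact (guard_core T T' _ li l as_ at_ Hc Fi Ei Ias Iat Eas Eat Hb Cs).
    + exact (guard_core T T' _ lj l at_ as_ Hc Fj Ej Iat Ias Eat Eas Hb Ct).
Qed.
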